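(* Assume $\mathcal M$ satisfies extensibility. Let $\lambda\in\mathbb R^A$ with $\lambda>0$ such that $LP(\lambda)$ is feasible, and partition $A$ by equality of $\lambda_i$ into $S_1,\dots,S_d$ with $\lambda(S_1)<\dots<\lambda(S_d)$; set $T_g=\bigcup_{q=g}^dS_q$. (1) Every optimal solution $X$ of $LP(\lambda)$ is jointly optimal for $T_g$ for every $g\in[d]$, and for any two optimal solutions $X,Y$ of $LP(\lambda)$, $\mathrm{delay}_{S_g}(X)=\mathrm{delay}_{S_g}(Y)$ for all $g\in[d]$. (2) If $(\alpha,p)$ and $(\alpha',p')$ are optimal solutions of $DLP(\lambda)$ and, for some $g\in[d]$, $\sum_{i\in S_g,k}r_{ik}\alpha_{ik}=\sum_{i\in S_g,k}r_{ik}\alpha'_{ik}$, then $\mathrm{pay}_{S_g}(X,p)=\mathrm{pay}_{S_g}(X,p')$ for every optimal solution $X$ of $LP(\lambda)$. (3) If $X,X'$ are optimal solutions of $LP(\lambda)$, $(\alpha,p)$ is an optimal solution of $DLP(\lambda)$, $g\in[d]$ and $S\subseteq S_g$, then $\mathrm{delay}_S(X)\le\mathrm{delay}_S(X')$ implies $\mathrm{pay}_S(X,p)\ge\mathrm{pay}_S(X',p)$, and the first inequality is strict iff the second is strict.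
   Context: A market $\mathcal M$: finite agent set $A$, finite goods set $G$ (each of supply $1$), finite index set $C$; agent $i$ has real coefficients $a_{ijk}$, requirements $r_{ik}\ge0$, delays $d_{ij}\ge0$, budget $m_i>0$. CC$(i)$: $\sum_ja_{ijk}x_{ij}\ge r_{ik}$ for all $k$, $x_{ij}\ge0$. An allocation $X=(x_{ij})\ge0$ is supply respecting if $\sum_ix_{ij}\le1$ for all $j$. For $S\subseteq A$, $X$ is jointly optimal for $S$ if it satisfies CC$(i)$ for all $i\in S$, is supply respecting, and minimizes $\sum_{i\in S}\sum_jd_{ij}x_{ij}$ among allocations with these two properties. $\mathcal M$ satisfies extensibility if for every $S\subset A$, every $X$ jointly optimal for $S$, and every $i\in A\setminus S$, there is $X'$ jointly optimal for $S\cup\{i\}$ with $\sum_jd_{i'j}x'_{i'j}=\sum_jd_{i'j}x_{i'j}$ for all $i'\in S$. $LP(\lambda)$: minimize $\sum_i\lambda_i\sum_jd_{ij}x_{ij}$ s.t. $\sum_ja_{ijk}x_{ij}\ge r_{ik}$ for all $(i,k)$, $\sum_ix_{ij}\le1$ for all $j$, $x\ge0$. $DLP(\lambda)$: maximize $\sum_{i,k}r_{ik}\alpha_{ik}-\sum_jp_j$ s.t. $\lambda_id_{ij}\ge\sum_ka_{ijk}\alpha_{ik}-p_j$ for all $(i,j)$, $\alpha\ge0$, $p\ge0$. Notation: $\mathrm{delay}_S(X)=\sum_{i\in S}\sum_jd_{ij}x_{ij}$, $\mathrm{pay}_S(X,p)=\sum_{i\in S}\sum_jp_jx_{ij}$;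 $\lambda(S)$ denotes the common value of $\lambda_i$ for $i\in S$; $[d]=\{1,\dots,d\}$. *)

(* Defs.v *)
From HB Require Import structures.
From mathcomp Require Import all_boot all_order all_algebra.
Set Implicit Arguments. Unset Strict Implicit. Unset Printing Implicit Defensive.
Import Order.TTheory GRing.Theory Num.Theory.
Local Open Scope ring_scope.

Section Market.
Variables (R : realFieldType) (A G C : finType).
Variables (a : A -> G -> C -> R) (r : A -> C -> R) (d : A -> G -> R).

Definition alloc := A -> G -> R.

Definition CC (i : A) (X : alloc) : Prop :=
  forall k : C, r i k <= \sum_(j : G) a i j k * X i j.

Definition nonneg_alloc (X : alloc) : Prop := forall i j, 0 <= X i j.

Definition supply_respecting (X : alloc) : Prop :=
  nonneg_alloc X /\ forall j : G, \sum_(i : A) X i j <= 1.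

Definition agent_delay (i : A) (X : alloc) : R := \sum_(j : G) d i j * X i j.

Definition delay (S : {set A}) (X : alloc) : R := \sum_(i in S) agent_delay i X.

Definition pay (S : {set A}) (X : alloc) (p : G -> R) : R :=
  \sum_(i in S) \sum_(j : G) p j * X i j.

Definition jointly_optimal (S : {set A}) (X : alloc) : Prop :=
  [/\ supply_respecting X, (forall i, i \in S -> CC i X) &
      forall Y : alloc, supply_respecting Y -> (forall i, i \in S -> CC i Y) ->
        delay S X <= delay S Y].

Definition extensibility : Prop :=
  forall (S : {set A}) (X : alloc), jointly_optimal S X ->
  forall i : A, i \notin S ->
  exists X' : alloc, jointly_optimal (i |: S) X' /\
    forall i', i' \in S -> agent_delay i' X' = agent_delay i' X.

Definition LP_feasible_sol (X : alloc) : Prop :=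
  supply_respecting X /\ forall i, CC i X.

Definition LP_obj (lam : A -> R) (X : alloc) : R :=
  \sum_(i : A) lam i * agent_delay i X.

Definition LP_feasible : Prop := exists X, LP_feasible_sol X.

Definition LP_optimal (lam : A -> R) (X : alloc) : Prop :=
  LP_feasible_sol X /\
  forall Y, LP_feasible_sol Y -> LP_obj lam X <= LP_obj lam Y.

Definition DLP_feasible_sol (lam : A -> R) (alpha : A -> C -> R) (p : G -> R) : Prop :=
  [/\ forall i k, 0 <= alpha i k, forall j, 0 <= p j &
      forall i j, \sum_(k : C) a i j k * alpha i k - p j <= lam i * d i j].

Definition DLP_obj (alpha : A -> C -> R) (p : G -> R) : R :=
  \sum_(i : A) \sum_(k : C) r i k * alpha i k - \sum_(j : G) p j.

Definition DLP_optimal (lam : A -> R) (alpha : A -> C -> R) (p : G -> R) : Prop :=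
  DLP_feasible_sol lam alpha p /\
  forall alpha' p', DLP_feasible_sol lam alpha' p' ->
    DLP_obj alpha' p' <= DLP_obj alpha p.

End Market.

(* The classes S_g of the partition of A by equality of lambda_i:
   S_g = level lam i0 for any i0 in S_g; T_g = upper lam i0 = union of the
   classes whose lambda value is >= lambda(S_g). *)
Definition level (R : realFieldType) (A : finType) (lam : A -> R) (i0 : A) : {set A} :=
  [set i | lam i == lam i0].
Definition upper (R : realFieldType) (A : finType) (lam : A -> R) (i0 : A) : {set A} :=
  [set i | lam i0 <= lam i].

(* Main.v *)
Require Import Defs.
From HB Require Import structures.
From mathcomp Require Import all_boot all_order all_algebra.
From mathcomp Require Import ring lra zify.
From Stdlib Require List.
Set Implicit Arguments. Unset Strict Implicit. Unset Printing Implicit Defensive.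
Import Order.TTheory GRing.Theory Num.Theory.
Local Open Scope ring_scope.

Section FM.
Variables (R : realFieldType) (T : finType).
Definition ineq := ((T -> R) * R)%type.
Definition ev (f : ineq) (x : T -> R) : R := \sum_(t : T) f.1 t * x t + f.2.
Definition sat (s : list ineq) (x : T -> R) := forall f, List.In f s -> 0 <= ev f x.
Definition comb (c1 : R) (f : ineq) (c2 : R) (g : ineq) : ineq :=
  (fun t => c1 * f.1 t + c2 * g.1 t, c1 * f.2 + c2 * g.2).
Inductive cone (s : list ineq) : ineq -> Prop :=
| cone_mem f : List.In f s -> cone s f
| cone_comb c1 f c2 g : 0 <= c1 -> 0 <= c2 -> cone s f -> cone s g ->
    cone s (comb c1 f c2 g).

Lemma ev_comb c1 f c2 g x : ev (comb c1 f c2 g) x = c1 * ev f x + c2 * ev g x.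
Proof.
rewrite /ev /=.
have -> : \sum_t (c1 * f.1 t + c2 * g.1 t) * x t =
   c1 * \sum_t f.1 t * x t + c2 * \sum_t g.1 t * x t.
  by rewrite !mulr_sumr -big_split /=; apply: eq_bigr => t _; ring.
ring.
Qed.

Lemma cone_sat s f x : sat s x -> cone s f -> 0 <= ev f x.
Proof.
move=> hs; elim=> [g /hs //|c1 g c2 h h1 h2 _ e1 _ e2].
rewrite ev_comb; apply: addr_ge0; exact: mulr_ge0.
Qed.

Lemma cone_trans s s' f : (forall g, List.In g s' -> cone s g) -> cone s' f -> cone s f.
Proof.
move=> H; elim=> [g /H //| c1 g c2 h h1 h2 _ e1 _ e2]; exact: cone_comb.
Qed.

Definition upd (x : T -> R) m y := fun t => if t == m then y else x t.
Lemma ev_upd f x m y : ev f (upd x m y) = ev f x + f.1 m * (y - x m).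
Proof.
rewrite /ev [X in X + _ = _](bigD1 m) // [X in _ = X + _ + _](bigD1 m) //= /upd eqxx.
have -> : \sum_(t | t != m) f.1 t * (if t == m then y else x t) =
          \sum_(t | t != m) f.1 t * x t.
  by apply: eq_bigr => t /negbTE ->.
ring.
Qed.

Definition supp (s : list ineq) (V : {set T}) :=
  forall f, List.In f s -> forall t, t \notin V -> f.1 t = 0.

Definition fm (s : list ineq) m : list ineq :=
  List.filter (fun f => f.1 m == 0) s ++
  List.flat_map (fun f => List.map (fun g => comb (- g.1 m) f (f.1 m) g)
     (List.filter (fun g => g.1 m < 0) s)) (List.filter (fun f => 0 < f.1 m) s).

Lemma In_fm h s m : List.In h (fm s m) ->
  (List.In h s /\ h.1 m = 0) \/
  exists f g, [/\ List.In f s, List.In g s, 0 < f.1 m, g.1 m < 0 &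
                  h = comb (- g.1 m) f (f.1 m) g].
Proof.
rewrite /fm List.in_app_iff List.filter_In List.in_flat_map.
case=> [[H /eqP E]|[f [/List.filter_In [Hf Pf] /List.in_map_iff [g [<- /List.filter_In [Hg Ng]]]]]].
  by left.
by right; exists f, g.
Qed.

Lemma fm_In0 f s m : List.In f s -> f.1 m = 0 -> List.In f (fm s m).
Proof.
move=> H E; rewrite /fm List.in_app_iff; left; apply/List.filter_In; split=> //.
by rewrite E eqxx.
Qed.

Lemma fm_In2 f g s m : List.In f s -> List.In g s -> 0 < f.1 m -> g.1 m < 0 ->
  List.In (comb (- g.1 m) f (f.1 m) g) (fm s m).
Proof.
move=> Hf Hg Pf Ng; rewrite /fm List.in_app_iff; right.
apply/List.in_flat_map; exists f; split; first by apply/List.filter_In.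
apply/List.in_map_iff; exists g; split=> //; by apply/List.filter_In.
Qed.

Lemma list_dec (X : Type) (P : X -> bool) (l : list X) :
  (forall f, List.In f l -> P f) \/ exists f, List.In f l /\ ~~ P f.
Proof.
elim: l => [|x l [IH|[f [H1 H2]]]]; first by left.
- case Px: (P x); [left|right].
    by move=> f /= [<-|/IH].
  by exists x; split; [left|rewrite Px].
- by right; exists f; split=> //; right.
Qed.

Lemma interp (X : Type) (P N : list X) (L U : X -> R) :
  (forall f g, List.In f P -> List.In g N -> L f <= U g) ->
  exists y, (forall f, List.In f P -> L f <= y) /\ (forall g, List.In g N -> y <= U g).
Proof.
elim: P => [|f P IH] H.
- have [y hy] : exists y, forall g, List.In g N -> y <= U g.
    elim: N {H} => [|g N [y hy]]; first by exists 0.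
    exists (Num.min (U g) y) => h /= [<-|/hy hh].
      by rewrite ge_min lexx.
    by rewrite ge_min hh orbT.
  by exists y; split.
- have [y [hy1 hy2]] : exists y, (forall f, List.In f P -> L f <= y) /\
       (forall g, List.In g N -> y <= U g).
    by apply: IH => f' g hf hg; apply: H => //; right.
  exists (Num.max y (L f)); split.
    by move=> f' /= [<-|/hy1 h]; rewrite le_max ?lexx ?orbT ?h.
  move=> g hg; rewrite ge_max hy2 //=; by apply: H => //; left.
Qed.

Lemma FM n : forall (V : {set T}) s, #|V| = n -> supp s V -> (forall x, ~ sat s x) ->
  exists f, [/\ cone s f, forall t, f.1 t = 0 & f.2 < 0].
Proof.
elim: n => [|n IH] V s hV hsupp hinf.
- have V0 : V = set0 by apply/eqP; rewrite -cards_eq0 hV.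
  case: (list_dec (fun f : ineq => 0 <= f.2) s) => [H|[f [Hf Hn]]].
    exfalso; apply: (hinf (fun _ => 0)) => f Hf.
    by rewrite /ev big1 ?add0r ?H // => t _; rewrite mulr0.
  exists f; split; first exact: cone_mem.
    by move=> t; apply: hsupp => //; rewrite V0 in_set0.
  by rewrite ltNge.
- have /set0Pn [m hm] : V != set0 by rewrite -card_gt0 hV.
  have hV' : #|V :\ m| = n by move: hV; rewrite (cardsD1 m V) hm add1n => -[].
  have hsupp' : supp (fm s m) (V :\ m).
    move=> h /In_fm [[Hh E]|[f [g [Hf Hg Pf Ng ->]]]] t; rewrite in_setD1 negb_and negbK.
      by case/orP=> [/eqP ->//|]; exact: hsupp.
    case/orP=> [/eqP ->|ht]; first by rewrite /comb /=; ring.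
    by rewrite /comb /= (hsupp f Hf t ht) (hsupp g Hg t ht); ring.
  have hinf' : forall x, ~ sat (fm s m) x.
    move=> x hx.
    pose E (h : ineq) := x m - ev h x / h.1 m.
    have Hc : forall f g, List.In f (List.filter (fun f : ineq => 0 < f.1 m) s) ->
       List.In g (List.filter (fun g : ineq => g.1 m < 0) s) -> E f <= E g.
      move=> f g /List.filter_In [Hf Pf] /List.filter_In [Hg Ng].
      have := hx _ (fm_In2 Hf Hg Pf Ng); rewrite ev_comb => hc.
      rewrite -subr_ge0.
      have -> : E g - E f = (- g.1 m * ev f x + f.1 m * ev g x) / (f.1 m * - g.1 m).
        rewrite /E; field.
        by rewrite (ltr0_neq0 Ng) (lt0r_neq0 Pf).
      apply: divr_ge0 => //; apply: mulr_ge0; rewrite ?oppr_ge0 ltW //.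
    have [y [hy1 hy2]] := interp Hc.
    apply: (hinf (upd x m y)) => f Hf; rewrite ev_upd.
    case: (ltgtP (f.1 m) 0) => Hm.
    + have -> : ev f x + f.1 m * (y - x m) = f.1 m * (y - E f).
        by rewrite /E; field; rewrite ltr0_neq0.
      apply: mulr_le0; first exact: ltW.
      by rewrite subr_le0; apply: hy2; apply/List.filter_In.
    + have -> : ev f x + f.1 m * (y - x m) = f.1 m * (y - E f).
        by rewrite /E; field; rewrite lt0r_neq0.
      apply: mulr_ge0; first exact: ltW.
      by rewrite subr_ge0; apply: hy1; apply/List.filter_In.
    + by rewrite Hm mul0r addr0; apply: hx; apply: fm_In0.
  have [f [hf1 hf2 hf3]] := IH _ _ hV' hsupp' hinf'.
  exists f; split=> //; apply: cone_trans hf1 => h /In_fm [[Hh _]|[f' [g [Hf Hg Pf Ng ->]]]].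
    exact: cone_mem.
  apply: cone_comb; rewrite ?oppr_ge0 ?ltW //; exact: cone_mem.
Qed.
End FM.

Section Dual.
Variables (R : realFieldType) (A G C : finType).
Variables (a : A -> G -> C -> R) (r : A -> C -> R) (d : A -> G -> R) (lam : A -> R).

Definition Aterm (X : alloc R A G) (al : A -> C -> R) i :=
  \sum_k al i k * (\sum_j a i j k * X i j - r i k).
Definition Cterm (X : alloc R A G) (al : A -> C -> R) (p : G -> R) mu i :=
  \sum_j X i j * (mu * (lam i * d i j) - (\sum_k a i j k * al i k - p j)).
Definition Bterm (X : alloc R A G) (p : G -> R) := \sum_j p j * (1 - \sum_i X i j).

Lemma agent_id X al p mu i : Aterm X al i + Cterm X al p mu i =
  mu * (lam i * agent_delay d i X) - \sum_k r i k * al i k + \sum_j p j * X i j.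
Proof.
have e1 : Aterm X al i = \sum_j X i j * (\sum_k a i j k * al i k) - \sum_k r i k * al i k.
  rewrite /Aterm (eq_bigr (fun k => \sum_j al i k * a i j k * X i j - r i k * al i k)).
    rewrite sumrB exchange_big /=; congr (_ - _); apply: eq_bigr => j _.
    by rewrite mulr_sumr; apply: eq_bigr => k _; ring.
  by move=> k _; rewrite mulrBr mulr_sumr; congr (_ - _); [apply: eq_bigr => j _; ring | ring].
have e2 : Cterm X al p mu i = mu * (lam i * agent_delay d i X)
     - \sum_j X i j * (\sum_k a i j k * al i k) + \sum_j p j * X i j.
  rewrite /Cterm /agent_delay (eq_bigr (fun j => (mu * lam i) * (d i j * X i j)
     - X i j * (\sum_k a i j k * al i k) + p j * X i j)); last by move=> j _; ring.
  rewrite big_split sumrB /= -(mulr_sumr _ _ _ (mu * lam i)); ring.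
rewrite e1 e2; ring.
Qed.

Lemma dual_id X al p mu : mu * LP_obj d lam X - DLP_obj r al p =
  \sum_i Aterm X al i + \sum_i Cterm X al p mu i + Bterm X p.
Proof.
rewrite -big_split /= (eq_bigr (fun i => mu * (lam i * agent_delay d i X)
   - \sum_k r i k * al i k + \sum_j p j * X i j)); last by move=> i _; rewrite agent_id.
rewrite big_split sumrB /= -(mulr_sumr _ _ _ mu) /Bterm.
rewrite (eq_bigr (fun j => p j - \sum_i p j * X i j)); last first.
  by move=> j _; rewrite mulrBr mulr1 mulr_sumr.
rewrite sumrB (exchange_big _ _ _ _ _ (fun i j => p j * X i j)) /= /DLP_obj /LP_obj; ring.
Qed.

Lemma Aterm_ge0 X al i : (forall k, 0 <= al i k) -> CC a r i X -> 0 <= Aterm X al i.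
Proof. by move=> h hc; apply: sumr_ge0 => k _; apply: mulr_ge0; rewrite ?subr_ge0. Qed.

Lemma Cterm_ge0 X al p mu i : (forall j, 0 <= X i j) ->
  (forall j, \sum_k a i j k * al i k - p j <= mu * (lam i * d i j)) -> 0 <= Cterm X al p mu i.
Proof. by move=> h hc; apply: sumr_ge0 => j _; apply: mulr_ge0; rewrite ?subr_ge0. Qed.

Lemma Bterm_ge0 X p : (forall j, 0 <= p j) -> (forall j, \sum_i X i j <= 1) -> 0 <= Bterm X p.
Proof. by move=> h hc; apply: sumr_ge0 => j _; apply: mulr_ge0; rewrite ?subr_ge0. Qed.

Lemma weak_gen X al p mu : LP_feasible_sol a r X -> (forall i k, 0 <= al i k) ->
  (forall j, 0 <= p j) ->
  (forall i j, \sum_k a i j k * al i k - p j <= mu * (lam i * d i j)) ->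
  DLP_obj r al p <= mu * LP_obj d lam X.
Proof.
move=> [[hn hs] hcc] hal hp hc; rewrite -subr_ge0 dual_id.
apply: addr_ge0; [apply: addr_ge0|]; last exact: Bterm_ge0.
  by apply: sumr_ge0 => i _; apply: Aterm_ge0.
by apply: sumr_ge0 => i _; apply: Cterm_ge0.
Qed.

End Dual.

Lemma In_mem (X : eqType) (x : X) (s : seq X) : x \in s -> List.In x s.
Proof. elim: s => //= y s IH; rewrite in_cons => /orP [/eqP ->|/IH]; auto. Qed.

Lemma sum_delta (R : realFieldType) (X : finType) (y : X) (F : X -> R) :
  \sum_x F x * (if x == y then 1 else 0) = F y.
Proof.
rewrite (bigD1 y) //= eqxx mulr1 big1 ?addr0 // => x /negbTE ->; by rewrite mulr0.
Qed.

Section Sys.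
Variables (R : realFieldType) (A G C : finType).
Variables (a : A -> G -> C -> R) (r : A -> C -> R) (d : A -> G -> R) (lam : A -> R).
Local Notation T := (A * G)%type.

Definition valloc (x : T -> R) : alloc R A G := fun i j => x (i, j).

Definition cc_in i k : ineq R T := (fun t : T => if t.1 == i then a i t.2 k else 0, - r i k).
Definition sup_in j : ineq R T := (fun t : T => if t.2 == j then -1 else 0, 1).
Definition nn_in t0 : ineq R T := (fun t : T => if t == t0 then 1 else 0, 0).
Definition obj_in v : ineq R T := (fun t : T => - (lam t.1 * d t.1 t.2), v).
Definition sys v : list (ineq R T) :=
  obj_in v :: (List.flat_map (fun i => List.map (cc_in i) (enum C)) (enum A) ++
    List.map sup_in (enum G) ++
    List.flat_map (fun i => List.map (fun j => nn_in (i, j)) (enum G)) (enum A)).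

Lemma sum_pair (F : T -> R) : \sum_(t : T) F t = \sum_i \sum_j F (i, j).
Proof. by rewrite pair_big; apply: eq_big => // -[i j]. Qed.

Lemma ev_cc i k x : ev (cc_in i k) x = \sum_j a i j k * x (i, j) - r i k.
Proof.
rewrite /ev /= sum_pair (bigD1 i) //= eqxx /= [X in _ + X + _]big1 ?addr0 // => i' /negbTE H.
by apply: big1 => j _; rewrite /= H mul0r.
Qed.

Lemma ev_sup j x : ev (sup_in j) x = 1 - \sum_i x (i, j).
Proof.
rewrite /ev /= sum_pair addrC; congr (_ + _); rewrite -sumrN; apply: eq_bigr => i _.
rewrite (bigD1 j) //= eqxx /= [X in _ + X]big1 ?addr0 ?mulN1r // => j' /negbTE H.
by rewrite /= H mul0r.
Qed.

Lemma ev_nn t0 x : ev (nn_in t0) x = x t0.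
Proof. by rewrite /ev /= addr0 (eq_bigr (fun t => x t * (if t == t0 then 1 else 0))) ?sum_delta // => t _; rewrite mulrC. Qed.

Lemma ev_obj v x : ev (obj_in v) x = v - LP_obj d lam (valloc x).
Proof.
rewrite /ev /= sum_pair addrC /LP_obj; congr (_ + _); rewrite -sumrN; apply: eq_bigr => i _.
by rewrite /agent_delay mulr_sumr -sumrN; apply: eq_bigr => j _; rewrite /valloc; ring.
Qed.

Lemma sat_sys v x : sat (sys v) x ->
  LP_feasible_sol a r (valloc x) /\ LP_obj d lam (valloc x) <= v.
Proof.
move=> hs.
have hin : forall f, List.In f (List.flat_map (fun i => List.map (cc_in i) (enum C)) (enum A) ++
    List.map sup_in (enum G) ++
    List.flat_map (fun i => List.map (fun j => nn_in (i, j)) (enum G)) (enum A)) -> 0 <= ev f x.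
  by move=> f hf; apply: hs; right.
split; last by have := hs _ (or_introl erefl); rewrite ev_obj subr_ge0.
split; first split.
- move=> i j; rewrite /valloc -ev_nn; apply: hin; rewrite !List.in_app_iff; right; right.
  apply/List.in_flat_map; exists i; split; first by apply: In_mem; rewrite mem_enum.
  by apply: List.in_map; apply: In_mem; rewrite mem_enum.
- move=> j; rewrite -subr_ge0 -ev_sup; apply: hin; rewrite !List.in_app_iff; right; left.
  by apply: List.in_map; apply: In_mem; rewrite mem_enum.
- move=> i k; rewrite -subr_ge0 -ev_cc; apply: hin; rewrite !List.in_app_iff; left.
  apply/List.in_flat_map; exists i; split; first by apply: In_mem; rewrite mem_enum.
  by apply: List.in_map; apply: In_mem; rewrite mem_enum.
Qed.


Lemma linsum (X : finType) (F H : X -> R) c1 c2 :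
  \sum_x (c1 * F x + c2 * H x) = c1 * \sum_x F x + c2 * \sum_x H x.
Proof. by rewrite big_split /= !mulr_sumr. Qed.

Lemma linsum2 (X : finType) (F K H : X -> R) c1 c2 :
  \sum_x F x * (c1 * K x + c2 * H x) = c1 * \sum_x F x * K x + c2 * \sum_x F x * H x.
Proof.
rewrite -linsum; apply: eq_bigr => x _; ring.
Qed.

Lemma sum_delta2 (X Y : finType) (x0 : X) (y0 : Y) (F : X -> Y -> R) :
  \sum_x \sum_y F x y * (if x == x0 then (if y == y0 then 1 else 0) else 0) = F x0 y0.
Proof.
rewrite (eq_bigr (fun x => F x y0 * (if x == x0 then 1 else 0))) ?sum_delta // => x _.
case: eqP => _; first by rewrite sum_delta mulr1.
by rewrite mulr0 big1 // => y _; rewrite mulr0.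
Qed.

Lemma sum_ind (X : finType) (x0 : X) : \sum_x (if x == x0 then (1 : R) else 0) = 1.
Proof. by rewrite -big_mkcond /= big_pred1_eq. Qed.

Lemma cone_sys v f : cone (sys v) f -> exists al p z mu,
  [/\ (forall i k, 0 <= al i k) /\ (forall j, 0 <= p j), (forall t, 0 <= z t), 0 <= mu,
      (forall t : T, f.1 t = \sum_k a t.1 t.2 k * al t.1 k - p t.2 + z t - mu * (lam t.1 * d t.1 t.2)) &
      f.2 = - \sum_i \sum_k r i k * al i k + \sum_j p j + mu * v].
Proof.
elim=> [f' hf|c1 f1 c2 g1 hc1 hc2 _ [al1 [p1 [z1 [mu1 [[ha1 hp1] hz1 hm1 he1 he2]]]]]
                                      _ [al2 [p2 [z2 [mu2 [[ha2 hp2] hz2 hm2 hg1 hg2]]]]]].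
- case: hf => [<-|/List.in_app_iff [|/List.in_app_iff [|]]].
  + exists (fun _ _ => 0), (fun _ => 0), (fun _ => 0), 1; split => //.
    * move=> [i j] /=; rewrite big1 => [|k _]; last by rewrite mulr0.
      ring.
    * rewrite /= big1 => [|i _]; last by rewrite big1 // => k _; rewrite mulr0.
      rewrite big1 //; ring.
  + move=> /List.in_flat_map [i [_ /List.in_map_iff [k [<- _]]]].
    exists (fun i' k' => if i' == i then (if k' == k then 1 else 0) else 0), (fun _ => 0),
      (fun _ => 0), 0; split => //.
    * by split=> [i' k'|j]; rewrite ?lexx //; case: (i' == i); case: (k' == k); rewrite ?ler01 ?lexx.
    * move=> [i0 j] /=; case: (eqVneq i0 i) => [->|ne].
        rewrite sum_delta; ring.
      rewrite big1 => [|k' _]; last by rewrite mulr0.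
      ring.
    * rewrite /= sum_delta2 big1 //; ring.
  + move=> /List.in_map_iff [j [<- _]].
    exists (fun _ _ => 0), (fun j' => if j' == j then 1 else 0), (fun _ => 0), 0; split => //.
    * by split=> // j'; case: (j' == j); rewrite ?ler01 ?lexx.
    * move=> [i0 j0] /=; rewrite big1 => [|k _]; last by rewrite mulr0.
      case: eqP => _; ring.
    * rewrite /= sum_ind big1 => [|i _]; last by rewrite big1 // => k _; rewrite mulr0.
      ring.
  + move=> /List.in_flat_map [i [_ /List.in_map_iff [j [<- _]]]].
    exists (fun _ _ => 0), (fun _ => 0), (fun t => if t == (i, j) then 1 else 0), 0; split => //.
    * by move=> t; case: (t == (i, j)); rewrite ?ler01 ?lexx.
    * move=> t /=; rewrite big1 => [|k _]; last by rewrite mulr0.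
      by rewrite subr0 add0r mul0r subr0.
    * rewrite /= big1 => [|i' _]; last by rewrite big1 // => k _; rewrite mulr0.
      rewrite big1 //; ring.
- exists (fun i k => c1 * al1 i k + c2 * al2 i k), (fun j => c1 * p1 j + c2 * p2 j),
    (fun t => c1 * z1 t + c2 * z2 t), (c1 * mu1 + c2 * mu2); split.
  + split=> [i k|j]; apply: addr_ge0; apply: mulr_ge0 => //.
  + by move=> t; apply: addr_ge0; apply: mulr_ge0.
  + by apply: addr_ge0; apply: mulr_ge0.
  + move=> t; rewrite /comb /= he1 hg1 (linsum2 (fun k => a t.1 t.2 k) (al1 t.1) (al2 t.1)); ring.
  + rewrite /comb /= he2 hg2 (linsum p1 p2).
    have -> : \sum_i \sum_k r i k * (c1 * al1 i k + c2 * al2 i k) =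
       \sum_i (c1 * \sum_k r i k * al1 i k + c2 * \sum_k r i k * al2 i k).
      by apply: eq_bigr => i _; rewrite linsum2.
    rewrite linsum; ring.
Qed.

End Sys.

Section St.
Variables (R : realFieldType) (A G C : finType).
Variables (a : A -> G -> C -> R) (r : A -> C -> R) (d : A -> G -> R) (lam : A -> R).

Lemma strong X al p : LP_optimal a r d lam X -> DLP_optimal a r d lam al p ->
  DLP_obj r al p = LP_obj d lam X.
Proof.
move=> [hX hopt] [[hal hp hc] hdopt].
have weak : DLP_obj r al p <= LP_obj d lam X.
  by rewrite -[LP_obj _ _ _]mul1r; apply: (weak_gen (a := a)) => // i j; rewrite mul1r.
apply/eqP; rewrite eq_le weak /= leNgt; apply/negP => hlt.
set D := DLP_obj r al p in hlt.
have hinf : forall x, ~ sat (sys a r d lam D) x.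
  move=> x /sat_sys [hfx hle]; have := hopt _ hfx => h1.
  by have := le_lt_trans (le_trans h1 hle) hlt; rewrite ltxx.
have hsupp : supp (sys a r d lam D) [set: (A * G)%type].
  by move=> f _ t; rewrite in_setT.
have [f [hc1 hf1 hf2]] := FM (erefl #|[set: (A * G)%type]|) hsupp hinf.
have [al' [p' [z [mu [[ha' hp'] hz hmu he1 he2]]]]] := cone_sys hc1.
have hc' : forall i j, \sum_k a i j k * al' i k - p' j <= mu * (lam i * d i j).
  move=> i j; have := he1 (i, j); rewrite hf1 /= => e.
  have := hz (i, j); lra.
have hw := weak_gen hX ha' hp' hc'.
have hlt2 : mu * D < DLP_obj r al' p'.
  by move: hf2; rewrite he2 /DLP_obj; lra.
have hmu0 : 0 < mu.
  rewrite lt0r hmu andbT; apply/eqP => mu0; move: hlt2 hw; rewrite mu0 !mul0r => h1 h2.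
  by have := lt_le_trans h1 h2; rewrite ltxx.
have hfe : DLP_feasible_sol a d lam (fun i k => al' i k / mu) (fun j => p' j / mu).
  split.
  - by move=> i k; apply: divr_ge0 => //; exact: ltW.
  - by move=> j; apply: divr_ge0 => //; exact: ltW.
  - move=> i j; have -> : \sum_k a i j k * (al' i k / mu) - p' j / mu =
        (\sum_k a i j k * al' i k - p' j) / mu.
      by rewrite mulrBl mulr_suml; congr (_ - _); apply: eq_bigr => k _; rewrite mulrA.
    by rewrite ler_pdivrMr // mulrC.
have := hdopt _ _ hfe.
have -> : DLP_obj r (fun i k => al' i k / mu) (fun j => p' j / mu) = DLP_obj r al' p' / mu.
  rewrite /DLP_obj mulrBl !mulr_suml; congr (_ - _); apply: eq_bigr => i _.
  by rewrite mulr_suml; apply: eq_bigr => k _; rewrite mulrA.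
rewrite ler_pdivrMr // => h3.
by have := lt_le_trans hlt2 h3; rewrite mulrC ltxx.
Qed.

Lemma cs X al p i : LP_optimal a r d lam X -> DLP_optimal a r d lam al p ->
  \sum_j p j * X i j = \sum_k r i k * al i k - lam i * agent_delay d i X.
Proof.
move=> hX hD; have e := strong hX hD.
case: hX => [[[hn hs] hcc] _]; case: hD => [[hal hp hc] _].
have := dual_id a r d lam X al p 1; rewrite mul1r e subrr => h.
have hA : 0 <= \sum_i Aterm a r X al i by apply: sumr_ge0 => i' _; apply: Aterm_ge0.
have hC : 0 <= \sum_i Cterm a d lam X al p 1 i.
  by apply: sumr_ge0 => i' _; apply: Cterm_ge0 => // j; rewrite mul1r.
have hB : 0 <= Bterm X p by apply: Bterm_ge0.
have hA0 : \sum_i Aterm a r X al i = 0 by lra.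
have hC0 : \sum_i Cterm a d lam X al p 1 i = 0 by lra.
have Ai : Aterm a r X al i = 0.
  by apply: (psumr_eq0P _ hA0) => // i' _; apply: Aterm_ge0.
have Ci : Cterm a d lam X al p 1 i = 0.
  by apply: (psumr_eq0P _ hC0) => // i' _; apply: Cterm_ge0 => // j; rewrite mul1r.
have := agent_id a r d lam X al p 1 i; rewrite Ai Ci mul1r; lra.
Qed.

End St.

Section Mn.
Variables (R : realFieldType) (A G C : finType).
Variables (a : A -> G -> C -> R) (r : A -> C -> R) (d : A -> G -> R) (lam : A -> R).

Lemma seq_min (X : eqType) (s : seq X) (f : X -> R) : s != [::] ->
  exists2 i, i \in s & forall j, j \in s -> f i <= f j.
Proof.
elim: s => // x s IH _; case: (eqVneq s [::]) => [->|ne].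
  by exists x; rewrite ?mem_head // => j; rewrite inE => /eqP ->.
have [i hi hmin] := IH ne; case: (leP (f x) (f i)) => h.
  exists x; rewrite ?mem_head // => j; rewrite inE => /orP [/eqP ->//|/hmin].
  exact: le_trans.
exists i; first by rewrite inE hi orbT.
by move=> j; rewrite inE => /orP [/eqP ->|/hmin //]; exact: ltW.
Qed.

Lemma exists_min (S : {set A}) (f : A -> R) : S != set0 ->
  exists2 i, i \in S & forall j, j \in S -> f i <= f j.
Proof.
move=> /set0Pn [x hx].
have [|i hi hmin] := @seq_min _ (enum S) f.
  by apply/eqP => e; move: (mem_enum S x); rewrite e hx in_nil.
by exists i; [rewrite -mem_enum | move=> j hj; apply: hmin; rewrite mem_enum].
Qed.

Lemma Zexist : extensibility a r d -> forall S : {set A}, exists Z,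
  jointly_optimal a r d S Z /\
  forall i0, upper lam i0 \subset S -> jointly_optimal a r d (upper lam i0) Z.
Proof.
move=> hext S.
suff : forall n (S : {set A}), #|S| = n -> exists Z,
  jointly_optimal a r d S Z /\
  forall i0, upper lam i0 \subset S -> jointly_optimal a r d (upper lam i0) Z by apply.
elim => [|n IH] {}S hS.
- have -> : S = set0 by apply/eqP; rewrite -cards_eq0 hS.
  exists (fun _ _ => 0); split.
    split; first split.
    + by move=> i j.
    + by move=> j; rewrite big1 ?ler01.
    + by move=> i; rewrite in_set0.
    + by move=> Y _ _; rewrite /delay !big_set0.
  move=> i0 /subsetP /(_ i0); rewrite in_set0 => h; exfalso; apply: notF; apply: h.
  by rewrite /upper inE lexx.
- have hS0 : S != set0 by rewrite -card_gt0 hS.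
  have [i hi hmin] := exists_min lam hS0.
  have hS' : #|S :\ i| = n by move: hS; rewrite (cardsD1 i S) hi add1n => -[].
  have [Z' [jo' hup']] := IH _ hS'.
  have hni : i \notin S :\ i by rewrite setD11.
  have [X' [jo hpres]] := hext _ _ jo' i hni.
  rewrite setD1K // in jo.
  exists X'; split => // i0 hsub.
  case hii: (i \in upper lam i0).
    have -> : upper lam i0 = S => //.
    apply/eqP; rewrite eqEsubset hsub; apply/subsetP => j hj.
    move: hii; rewrite /upper !inE => hii; exact: le_trans hii (hmin j hj).
  have hsub' : upper lam i0 \subset S :\ i.
    apply/subsetP => j hj; rewrite in_setD1 (subsetP hsub j hj) andbT.
    by apply/eqP => eji; rewrite -eji hj in hii.
  have [hsr' hcc' hopt'] := hup' i0 hsub'.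
  case: jo => hsr hcc _; split => //.
    by move=> j hj; apply: hcc; exact: (subsetP hsub).
  move=> Y hY hYc.
  have -> : delay d (upper lam i0) X' = delay d (upper lam i0) Z'.
    by apply: eq_bigr => j hj; apply: hpres; exact: (subsetP hsub').
  exact: hopt'.
Qed.

Lemma abel0 (mu e : A -> R) (S : {set A}) : S = set0 ->
  0 <= \sum_(i in S) mu i * e i /\ (\sum_(i in S) mu i * e i = 0 ->
    forall i0, i0 \in S -> \sum_(i in S | mu i0 <= mu i) e i = 0).
Proof. by move=> ->; rewrite big_set0; split=> // _ i0; rewrite in_set0. Qed.

Lemma abel n : forall (mu e : A -> R) (S : {set A}), (#|S| <= n)%N ->
  (forall i, i \in S -> 0 < mu i) ->
  (forall i0, i0 \in S -> 0 <= \sum_(i in S | mu i0 <= mu i) e i) ->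
  0 <= \sum_(i in S) mu i * e i /\ (\sum_(i in S) mu i * e i = 0 ->
    forall i0, i0 \in S -> \sum_(i in S | mu i0 <= mu i) e i = 0).
Proof.
elim: n => [|n IH] mu e S hS hpos hup.
  by apply: abel0; apply/eqP; rewrite -cards_eq0 -leqn0.
case: (eqVneq S set0) => [/abel0 //|hS0].
have [im him hmin] := exists_min mu hS0.
set m := mu im.
have hm : 0 < m by apply: hpos.
set S' := [set i in S | m < mu i].
have hS' : (#|S'| <= n)%N.
  have sub : S' \subset S :\ im.
    apply/subsetP => i; rewrite !inE => /andP [hi hlt]; rewrite hi andbT.
    by apply/eqP => eim; move: hlt; rewrite eim /m ltxx.
  have := subset_leq_card sub; have := cardsD1 im S; rewrite him; lia.
have heqpred : forall i0, i0 \in S' -> forall i,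
    ((i \in S') && (mu i0 - m <= mu i - m)) = ((i \in S) && (mu i0 <= mu i)).
  move=> i0; rewrite inE => /andP [_ hlt] i; rewrite !inE lerD2r.
  case: (i \in S) => //=; apply/andP/idP => [[_ h] //|h]; split=> //.
  exact: lt_le_trans hlt h.
have hup' : forall i0, i0 \in S' ->
    0 <= \sum_(i in S' | mu i0 - m <= mu i - m) e i.
  move=> i0 hi0; rewrite (eq_bigl _ _ (heqpred i0 hi0)); apply: hup.
  by move: hi0; rewrite inE => /andP [].
have hpos' : forall i, i \in S' -> 0 < mu i - m.
  by move=> i; rewrite inE subr_gt0 => /andP [].
have [IH1 IH2] := IH (fun i => mu i - m) e S' hS' hpos' hup'.
have dec : \sum_(i in S) mu i * e i =
    m * \sum_(i in S) e i + \sum_(i in S') (mu i - m) * e i.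
  have -> : \sum_(i in S') (mu i - m) * e i = \sum_(i in S) (mu i - m) * e i.
    rewrite [in RHS](bigID (fun i => m < mu i)) /= [X in _ = _ + X]big1 ?addr0.
      by apply: eq_bigl => i; rewrite inE.
    move=> i /andP [hi]; rewrite -leNgt => hle.
    have -> : mu i = m by apply/le_anti; rewrite hle hmin.
    by rewrite subrr mul0r.
  rewrite mulr_sumr -big_split /=; apply: eq_bigr => i _; ring.
have hsumS : \sum_(i in S) e i = \sum_(i in S | mu im <= mu i) e i.
  by apply: eq_bigl => i; case hi: (i \in S) => //=; rewrite hmin.
have hA : 0 <= m * \sum_(i in S) e i.
  by apply: mulr_ge0; [exact: ltW | rewrite hsumS; apply: hup].
split; first by rewrite dec; apply: addr_ge0.
rewrite dec => h0.
set P1 := m * _ in hA h0; set P2 := \sum_(i in S') _ in IH1 IH2 h0.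
have e1 : P1 = 0 by lra.
have e2 : P2 = 0 by lra.
have eS : \sum_(i in S) e i = 0.
  by move/eqP: e1; rewrite /P1 mulf_eq0 (gt_eqF hm) /= => /eqP.
move=> i0 hi0; case: (boolP (m < mu i0)) => hlt.
  have hi0' : i0 \in S' by rewrite inE hi0 hlt.
  by rewrite -(eq_bigl _ _ (heqpred i0 hi0')); apply: IH2.
rewrite -leNgt in hlt; rewrite -[RHS]eS; apply: eq_bigl => i.
case hi: (i \in S) => //=; exact: le_trans hlt (hmin i hi).
Qed.

End Mn.

Section Fin.
Variables (R : realFieldType) (A G C : finType).
Variables (a : A -> G -> C -> R) (r : A -> C -> R) (d : A -> G -> R) (lam : A -> R).
Hypothesis hext : extensibility a r d.
Hypothesis hlam : forall i, 0 < lam i.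

Lemma part1 X : LP_optimal a r d lam X -> forall i0, jointly_optimal a r d (upper lam i0) X.
Proof.
move=> [[hsr hcc] hopt].
have [Z [[hzs hzc _] hup]] := Zexist lam hext [set: A].
have hZ : LP_feasible_sol a r Z by split=> // i; apply: hzc; rewrite in_setT.
have hupT : forall i0, jointly_optimal a r d (upper lam i0) Z.
  by move=> i0; apply: hup; apply: subsetT.
pose e i := agent_delay d i X - agent_delay d i Z.
have hsum : forall i0, \sum_(i in [set: A] | lam i0 <= lam i) e i =
    delay d (upper lam i0) X - delay d (upper lam i0) Z.
  move=> i0; rewrite /e sumrB /delay; congr (_ - _); apply: eq_bigl => i; by rewrite !inE.
have hup2 : forall i0, i0 \in [set: A] -> 0 <= \sum_(i in [set: A] | lam i0 <= lam i) e i.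
  move=> i0 _; rewrite hsum subr_ge0; have [_ _ h] := hupT i0; apply: h => //.
have [H1 H2] := abel (leqnn #|[set: A]|) (fun i _ => hlam i) hup2.
have hobj : \sum_(i in [set: A]) lam i * e i = LP_obj d lam X - LP_obj d lam Z.
  rewrite /e /LP_obj -sumrB; apply: eq_big => [i|i _]; by rewrite ?in_setT ?mulrBr.
have h0 : \sum_(i in [set: A]) lam i * e i = 0.
  apply/le_anti; rewrite H1 andbT hobj subr_le0; exact: hopt.
move=> i0; split => [|i _|Y hY hYc]; [exact: hsr | exact: hcc |].
have := H2 h0 i0 (in_setT i0); rewrite hsum => /eqP; rewrite subr_eq0 => /eqP ->.
by have [_ _ h] := hupT i0; apply: h.
Qed.

Lemma upper_eq X Y : LP_optimal a r d lam X -> LP_optimal a r d lam Y ->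
  forall i0, delay d (upper lam i0) X = delay d (upper lam i0) Y.
Proof.
move=> hX hY i0; have [hXs hXc hXo] := part1 hX i0; have [hYs hYc hYo] := part1 hY i0.
by apply/le_anti; rewrite hXo ?hYo.
Qed.

Lemma level_eq X Y : LP_optimal a r d lam X -> LP_optimal a r d lam Y ->
  forall i0, delay d (level lam i0) X = delay d (level lam i0) Y.
Proof.
move=> hX hY i0.
set Ss := [set i | lam i0 < lam i].
have hsplit : forall Z, delay d (upper lam i0) Z = delay d (level lam i0) Z + delay d Ss Z.
  move=> Z; rewrite /delay (bigID (fun i => lam i0 < lam i)) /= addrC.
  congr (_ + _); apply: eq_bigl => i; rewrite !inE; by case: (ltgtP (lam i0) (lam i)).
have hSs : delay d Ss X = delay d Ss Y.
  case: (eqVneq Ss set0) => [->|hS0]; first by rewrite /delay !big_set0.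
  have [j hj hmin] := exists_min lam hS0.
  have -> : Ss = upper lam j.
    apply/setP => i; rewrite !inE; apply/idP/idP => h.
      by apply: hmin; rewrite inE.
    by move: hj; rewrite inE => hj; exact: lt_le_trans hj h.
  exact: upper_eq.
have := upper_eq hX hY i0; rewrite !hsplit => h.
by move: h; rewrite hSs; lra.
Qed.

Lemma pay_cs X al p (S : {set A}) : LP_optimal a r d lam X -> DLP_optimal a r d lam al p ->
  pay S X p = \sum_(i in S) \sum_k r i k * al i k - \sum_(i in S) lam i * agent_delay d i X.
Proof. by move=> hX hD; rewrite /pay -sumrB; apply: eq_bigr => i _; rewrite (cs _ hX hD). Qed.

End Fin.

Unset Implicit Arguments.
Theorem lemma4p2 (R : realFieldType) (A G C : finType)
    (a : A -> G -> C -> R) (r : A -> C -> R) (d : A -> G -> R) (m : A -> R)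
    (hr : forall i k, 0 <= r i k) (hd : forall i j, 0 <= d i j)
    (hm : forall i, 0 < m i)
    (hext : extensibility a r d)
    (lam : A -> R) (hlam : forall i, 0 < lam i)
    (hfeas : LP_feasible a r) :
  (* (1) *)
  (forall X, LP_optimal a r d lam X ->
     forall i0 : A, jointly_optimal a r d (upper lam i0) X)
  /\ (forall X Y, LP_optimal a r d lam X -> LP_optimal a r d lam Y ->
     forall i0 : A, delay d (level lam i0) X = delay d (level lam i0) Y)
  (* (2) *)
  /\ (forall alpha p alpha' p',
        DLP_optimal a r d lam alpha p -> DLP_optimal a r d lam alpha' p' ->
        forall i0 : A,
        \sum_(i in level lam i0) \sum_(k : C) r i k * alpha i k =
        \sum_(i in level lam i0) \sum_(k : C) r i k * alpha' i k ->
        forall X, LP_optimal a r d lam X ->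
          pay (level lam i0) X p = pay (level lam i0) X p')
  (* (3) *)
  /\ (forall X X' alpha p,
        LP_optimal a r d lam X -> LP_optimal a r d lam X' ->
        DLP_optimal a r d lam alpha p ->
        forall (i0 : A) (S : {set A}), S \subset level lam i0 ->
        delay d S X <= delay d S X' ->
        pay S X' p <= pay S X p /\
        (delay d S X < delay d S X' <-> pay S X' p < pay S X p)).
Proof.
split; first by move=> X hX i0; apply: (part1 hext hlam).
split; first by move=> X Y hX hY i0; apply: (level_eq hext hlam).
split.
  move=> al p al' p' hD hD' i0 heq X hX.
  by rewrite (pay_cs _ hX hD) (pay_cs _ hX hD') heq.
move=> X X' al p hX hX' hD i0 S hsub hle.
rewrite (pay_cs _ hX hD) (pay_cs _ hX' hD).
have hl : forall Z, \sum_(i in S) lam i * agent_delay d i Z = lam i0 * delay d S Z.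
  move=> Z; rewrite /delay mulr_sumr; apply: eq_bigr => i hi.
  by have := subsetP hsub i hi; rewrite inE => /eqP ->.
rewrite !hl -(ltr_pM2l (hlam i0)).
have h1 := ler_wpM2l (ltW (hlam i0)) hle.
set P := lam i0 * delay d S X in h1 *; set P' := lam i0 * delay d S X' in h1 *.
set Q := \sum_(i in S) _.
split; [lra | split => h; lra].
Qed.
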